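(* Let $\sigma,\eta>0$ and $\mathscr{C}$ be a family of balls as in the context, and assume there is $\kappa>0$ such that $|B|^{1/3}\ge\kappa|x_B|$ for all $B\in\mathscr{C}$ with $|x_B|$ sufficiently large. Then there exists $L=L(\eta,\kappa)\ge2$ such that, for every sufficiently large $n$, every $B\in\mathscr{C}$ intersecting $B(0,2n)\setminus B(0,n)$ satisfies $B\subset B(0,Ln)$ and $|x_B|\ge L^{-1}n$. In particular, for every sufficiently large $n$ there are at most $\frac{4\pi}{3}\sigma L^6\kappa^{-3}$ balls $B\in\mathscr{C}$ intersecting $B(0,2n)\setminus B(0,n)$.
   Context: Cover: for constants $\sigma,\eta>0$, $\mathscr{C}$ is a family of closed balls in $\mathbb{R}^3$ with $\bigcup_{B\in\mathscr{C}}B=\mathbb{R}^3$ and $|B|\geq 4\pi/3$ for all $B\in\mathscr{C}$, such that (i) each ball in $\mathscr{C}$ intersects at most $\sigma$ balls in $\mathscr{C}$, and (ii) if $B,B'\in\mathscr{C}$ intersect then $\eta^{-1}\le |B|^{1/3}/|B'|^{1/3}\le\eta$. $|B|$ is the volume and $x_B$ the center of $B$; $B(0,r)$ is the ball of radius $r$ centered at the origin. *)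

(* Defs.v *)
From Stdlib Require Import Reals List.
Open Scope R_scope.

Definition pt3 : Type := (R * R * R)%type.

Definition norm3 (p : pt3) : R :=
  let '(x, y, z) := p in sqrt (x * x + y * y + z * z).

Definition sub3 (p q : pt3) : pt3 :=
  let '(x, y, z) := p in let '(x', y', z') := q in (x - x', y - y', z - z').

Definition ball3 : Type := (pt3 * R)%type.
Definition center (B : ball3) : pt3 := fst B.
Definition radius (B : ball3) : R := snd B.

Definition in_ball (p : pt3) (B : ball3) : Prop :=
  norm3 (sub3 p (center B)) <= radius B.

Definition vol (B : ball3) : R := 4 / 3 * PI * radius B ^ 3.

Definition cbrt (x : R) : R := Rpower x (1 / 3).

Definition balls_intersect (B B' : ball3) : Prop :=
  exists p, in_ball p B /\ in_ball p B'.

Definition at_most (P : ball3 -> Prop) (N : R) : Prop :=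
  forall l : list ball3, NoDup l -> (forall B, In B l -> P B) -> INR (length l) <= N.

Definition is_cover (sigma eta : R) (C : ball3 -> Prop) : Prop :=
  (forall p : pt3, exists B, C B /\ in_ball p B) /\
  (forall B, C B -> vol B >= 4 * PI / 3) /\
  (forall B, C B -> at_most (fun B' => C B' /\ balls_intersect B B') sigma) /\
  (forall B B', C B -> C B' -> balls_intersect B B' ->
     / eta <= cbrt (vol B) / cbrt (vol B') <= eta).

Definition meets_annulus (n : R) (B : ball3) : Prop :=
  exists p, in_ball p B /\ n < norm3 p <= 2 * n.

Definition ball_subset_origin (B : ball3) (r : R) : Prop :=
  forall p, in_ball p B -> norm3 p <= r.

(* Main.v *)
Require Import Defs.
From Stdlib Require Import Reals List.
From Stdlib Require Import Lra Psatz ZArith Lia Classical ClassicalEpsilon.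
Open Scope R_scope.

Definition dist3 (p q : pt3) : R := norm3 (sub3 p q).
Definition sq3 (a b c : R) := a*a+b*b+c*c.

Lemma sq3_nonneg a b c : 0 <= sq3 a b c.
Proof. unfold sq3; nra. Qed.

Lemma dist3_def a b c a' b' c' :
  dist3 (a,b,c) (a',b',c') = sqrt (sq3 (a-a') (b-b') (c-c')).
Proof. reflexivity. Qed.

Lemma dist3_nonneg p q : 0 <= dist3 p q.
Proof. destruct p as [[a b] c], q as [[a' b'] c']. rewrite dist3_def. apply sqrt_pos. Qed.

Lemma dist3_sym p q : dist3 p q = dist3 q p.
Proof. destruct p as [[a b] c], q as [[a' b'] c']. rewrite !dist3_def.
  f_equal. unfold sq3; ring. Qed.

Lemma dist3_refl p : dist3 p p = 0.
Proof. destruct p as [[a b] c]. rewrite dist3_def.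
  replace (sq3 (a-a) (b-b) (c-c)) with 0 by (unfold sq3; ring). apply sqrt_0. Qed.

Lemma sqrt_le_iff x r : 0 <= x -> 0 <= r -> (sqrt x <= r <-> x <= r*r).
Proof. intros hx hr; split; intro h.
  - apply sqrt_le_0; auto. nra. rewrite sqrt_square; auto.
  - rewrite <- (sqrt_square r) by auto. apply sqrt_le_1_alt; auto. Qed.

Lemma mink a b c d e f :
  sqrt (sq3 (a+d) (b+e) (c+f)) <= sqrt (sq3 a b c) + sqrt (sq3 d e f).
Proof.
  assert (hB := sq3_nonneg a b c). assert (hC := sq3_nonneg d e f).
  assert (hs: 0 <= sqrt (sq3 a b c)) by apply sqrt_pos.
  assert (hs2: 0 <= sqrt (sq3 d e f)) by apply sqrt_pos.
  apply (proj2 (sqrt_le_iff _ (sqrt (sq3 a b c) + sqrt (sq3 d e f)) (sq3_nonneg _ _ _) ltac:(lra))).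
  assert (cross: a*d+b*e+c*f <= sqrt (sq3 a b c) * sqrt (sq3 d e f)).
  { rewrite <- sqrt_mult_alt by auto.
    destruct (Rle_or_lt (a*d+b*e+c*f) 0) as [h|h].
    - assert (0 <= sqrt (sq3 a b c * sq3 d e f)) by apply sqrt_pos. lra.
    - rewrite <- (sqrt_square (a*d+b*e+c*f)) by lra. apply sqrt_le_1_alt.
      unfold sq3.
      assert (id: (a*a+b*b+c*c)*(d*d+e*e+f*f) - (a*d+b*e+c*f)*(a*d+b*e+c*f)
        = (a*e-b*d)*(a*e-b*d) + (a*f-c*d)*(a*f-c*d) + (b*f-c*e)*(b*f-c*e)) by ring.
      assert (0 <= (a*e-b*d)*(a*e-b*d)) by exact (Rle_0_sqr _). assert (0 <= (a*f-c*d)*(a*f-c*d)) by exact (Rle_0_sqr _).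
      assert (0 <= (b*f-c*e)*(b*f-c*e)) by exact (Rle_0_sqr _). lra. }
  assert (e1: sqrt (sq3 a b c) * sqrt (sq3 a b c) = sq3 a b c) by (apply sqrt_sqrt; auto).
  assert (e2: sqrt (sq3 d e f) * sqrt (sq3 d e f) = sq3 d e f) by (apply sqrt_sqrt; auto).
  unfold sq3 in *. nra.
Qed.

Lemma dist3_tri p q r : dist3 p r <= dist3 p q + dist3 q r.
Proof. destruct p as [[a b] c], q as [[a' b'] c'], r as [[a'' b''] c'']. rewrite !dist3_def.
  replace (a - a'') with ((a-a')+(a'-a'')) by ring.
  replace (b - b'') with ((b-b')+(b'-b'')) by ring.
  replace (c - c'') with ((c-c')+(c'-c'')) by ring.
  apply mink. Qed.

Lemma sqrt_scale k a b c : sqrt (sq3 (k*a) (k*b) (k*c)) = Rabs k * sqrt (sq3 a b c).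
Proof. replace (sq3 (k*a) (k*b) (k*c)) with ((k*k) * sq3 a b c) by (unfold sq3; ring).
  rewrite sqrt_mult_alt by nra. f_equal. rewrite <- sqrt_Rsqr_abs. reflexivity. Qed.

Definition lerp (p q : pt3) (t : R) : pt3 :=
  let '(a,b,c) := p in let '(a',b',c') := q in (a + t*(a'-a), b + t*(b'-b), c+t*(c'-c)).

Lemma lerp_dist1 p q t : 0 <= t -> dist3 (lerp p q t) p = t * dist3 p q.
Proof. intro ht. destruct p as [[a b] c], q as [[a' b'] c']. simpl lerp. rewrite !dist3_def.
  replace (a + t*(a'-a) - a) with (t*(a'-a)) by ring.
  replace (b + t*(b'-b) - b) with (t*(b'-b)) by ring.
  replace (c + t*(c'-c) - c) with (t*(c'-c)) by ring.
  rewrite sqrt_scale, Rabs_right by lra. f_equal.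
  replace (a'-a) with (-1*(a-a')) by ring. replace (b'-b) with (-1*(b-b')) by ring.
  replace (c'-c) with (-1*(c-c')) by ring. rewrite sqrt_scale.
  rewrite Rabs_left by lra. ring. Qed.

Lemma lerp_dist2 p q t : t <= 1 -> dist3 (lerp p q t) q = (1 - t) * dist3 p q.
Proof. intro ht. destruct p as [[a b] c], q as [[a' b'] c']. simpl lerp. rewrite !dist3_def.
  replace (a + t*(a'-a) - a') with ((1-t)*(a-a')) by ring.
  replace (b + t*(b'-b) - b') with ((1-t)*(b-b')) by ring.
  replace (c + t*(c'-c) - c') with ((1-t)*(c-c')) by ring.
  rewrite sqrt_scale, Rabs_right by lra. reflexivity. Qed.

Lemma in_ball_dist p B : in_ball p B <-> dist3 p (center B) <= radius B.
Proof. reflexivity. Qed.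

Lemma close_intersect B B' : 0 < radius B -> 0 < radius B' ->
  dist3 (center B) (center B') <= radius B + radius B' -> balls_intersect B B'.
Proof. intros h1 h2 hd. set (t := radius B / (radius B + radius B')).
  assert (0 <= t <= 1). { unfold t; split.
    unfold Rdiv; apply Rmult_le_pos; [lra| left; apply Rinv_0_lt_compat; lra].
    apply Rmult_le_reg_r with (radius B + radius B'). lra. unfold Rdiv. rewrite Rmult_assoc, Rinv_l by lra. lra. }
  exists (lerp (center B) (center B') t). split; apply in_ball_dist.
  - rewrite lerp_dist1 by lra. 
    apply Rle_trans with (t * (radius B + radius B')). apply Rmult_le_compat_l; lra.
    unfold t; field_simplify; lra.
  - rewrite lerp_dist2 by lra.
    apply Rle_trans with ((1-t) * (radius B + radius B')). apply Rmult_le_compat_l; lra.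
    unfold t; field_simplify; lra.
Qed.


Definition c3 : R := Rpower (4/3*PI) (1/3).

Lemma c3_pos : 0 < c3.
Proof. unfold c3, Rpower. apply exp_pos. Qed.

Lemma cbrt_vol B : 0 < radius B -> cbrt (vol B) = c3 * radius B.
Proof. intro h. unfold cbrt, vol, c3. assert (0 < PI) by apply PI_RGT_0.
  rewrite <- Rpower_mult_distr by (try apply pow_lt; lra).
  f_equal. rewrite <- Rpower_pow by lra. rewrite Rpower_mult.
  replace (INR 3 * (1/3)) with 1 by (simpl; field). apply Rpower_1; lra. Qed.

Lemma radius_ge1 B : vol B >= 4*PI/3 -> 1 <= radius B.
Proof. unfold vol. intro h. assert (0 < PI) by apply PI_RGT_0.
  assert (h3: 1 <= radius B ^ 3).
  { apply Rmult_le_reg_l with (4/3*PI). nra. nra. }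
  destruct (Rle_or_lt 1 (radius B)) as [|hr]; auto.
  destruct (Rle_or_lt (radius B) 0). simpl in h3; nra.
  simpl in h3. nra. Qed.

Lemma cover_r1 s e C B : is_cover s e C -> C B -> 1 <= radius B.
Proof. intros [_ [h _]] hB. apply radius_ge1, h, hB. Qed.

Lemma ratio s e C B B' : is_cover s e C -> C B -> C B' -> balls_intersect B B' ->
  radius B <= e * radius B'.
Proof. intros hc hB hB' hi.
  assert (r1 := cover_r1 _ _ _ _ hc hB). assert (r2 := cover_r1 _ _ _ _ hc hB').
  destruct hc as [_ [_ [_ h]]]. destruct (h _ _ hB hB' hi) as [_ h2].
  rewrite !cbrt_vol in h2 by lra. assert (hc := c3_pos).
  replace (c3 * radius B / (c3 * radius B')) with (radius B / radius B') in h2 by (field; lra).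
  apply Rmult_le_reg_r with (/ radius B'). apply Rinv_0_lt_compat; lra.
  rewrite Rmult_assoc, Rinv_r by lra. lra. Qed.

Lemma eta_ge1 s e C B : is_cover s e C -> C B -> 1 <= e.
Proof. intros hc hB. assert (r1 := cover_r1 _ _ _ _ hc hB).
  assert (balls_intersect B B). { exists (center B). unfold in_ball. fold (dist3 (center B) (center B)).
    rewrite dist3_refl. lra. }
  pose proof (ratio _ _ _ _ _ hc hB hB H). nra. Qed.


Definition isk {A K : Type} (eqd : forall x y : K, {x = y} + {x <> y}) (f : A -> K) (k : K) (a : A) : bool := if eqd (f a) k then true else false.
Definition notk {A K : Type} (eqd : forall x y : K, {x = y} + {x <> y}) (f : A -> K) (k : K) (a : A) : bool := if eqd (f a) k then false else true.

Lemma len_split {A K : Type} (eqd : forall x y : K, {x = y} + {x <> y}) (f : A -> K) k (l : list A) : length l = (length (filter (isk eqd f k) l) + length (filter (notk eqd f k) l))%nat.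
Proof. induction l as [|a l IH]; simpl; auto. unfold isk at 1, notk at 1.
  destruct (eqd (f a) k); simpl; lia. Qed.

Lemma len_filter_sub {A K : Type} (eqd : forall x y : K, {x = y} + {x <> y}) (f : A -> K) k k' (l : list A) :
  (length (filter (isk eqd f k') (filter (notk eqd f k) l)) <= length (filter (isk eqd f k') l))%nat.
Proof. induction l as [|a l IH]; simpl; auto. unfold notk at 1.
  destruct (eqd (f a) k); simpl. destruct (isk eqd f k' a); simpl; lia.
  destruct (isk eqd f k' a); simpl; lia. Qed.

Lemma pigeon {A K : Type} (eqd : forall x y : K, {x = y} + {x <> y}) (f : A -> K) (cells : list K) (s : R) : forall (l : list A),
  (forall a, In a l -> In (f a) cells) ->
  (forall k, INR (length (filter (isk eqd f k) l)) <= s) ->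
  INR (length l) <= INR (length cells) * s.
Proof. induction cells as [|k cs IH]; intros l hin hk.
  - destruct l as [|a l]. simpl; lra. exfalso; apply (hin a); simpl; auto.
  - rewrite (len_split eqd f k l), plus_INR. simpl length. rewrite S_INR.
    assert (h2: INR (length (filter (notk eqd f k) l)) <= INR (length cs) * s).
    { apply IH.
      + intros a ha. apply filter_In in ha as [ha hn]. destruct (hin a ha) as [e|e]; auto.
        unfold notk in hn. destruct (eqd (f a) k); [discriminate|congruence].
      + intro k'. eapply Rle_trans; [apply le_INR, len_filter_sub|apply hk]. }
    specialize (hk k). lra. Qed.

Lemma clique s e C (l : list ball3) : is_cover s e C -> 0 < s -> NoDup l ->
  (forall B, In B l -> C B) -> (forall B B', In B l -> In B' l -> balls_intersect B B') ->
  INR (length l) <= s.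
Proof. intros hc hs hnd hC hi. destruct l as [|B1 l']. simpl; lra.
  destruct hc as [_ [_ [h _]]]. apply (h B1 (hC B1 (or_introl eq_refl))); auto.
  intros B hB. split; auto. apply hi; simpl; auto. Qed.

Lemma NoDup_filter' {A} (p : A -> bool) l : NoDup l -> NoDup (filter p l).
Proof. induction 1; simpl. constructor. destruct (p x); auto. constructor; auto.
  rewrite filter_In; tauto. Qed.

Definition fl (t : R) : Z := (up t - 1)%Z.
Lemma fl_spec t : IZR (fl t) <= t < IZR (fl t) + 1.
Proof. unfold fl. rewrite minus_IZR. destruct (archimed t). lra. Qed.

Lemma fl_eq a b : fl a = fl b -> Rabs (a - b) < 1.
Proof. intro h. destruct (fl_spec a), (fl_spec b). rewrite h in *. apply Rabs_def1; lra. Qed.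

Lemma Rabs_le_inv' t m : Rabs t <= m -> -m <= t <= m.
Proof. unfold Rabs; destruct (Rcase_abs t); lra. Qed.

Lemma fl_range t (M : nat) : Rabs t <= INR M -> (- Z.of_nat M - 1 <= fl t <= Z.of_nat M)%Z.
Proof. intro h. destruct (fl_spec t). apply Rabs_le_inv' in h. rewrite INR_IZR_INZ in h.
  split.
  - assert (IZR (- Z.of_nat M - 1) < IZR (fl t)). { rewrite minus_IZR, opp_IZR. lra. }
    apply lt_IZR in H1. lia.
  - assert (IZR (fl t) < IZR (Z.of_nat M) + 1) by lra.
    rewrite <- plus_IZR in H1. apply lt_IZR in H1. lia. Qed.

Definition zr (M : nat) : list Z := map (fun k => Z.of_nat k - Z.of_nat M - 1)%Z (seq 0 (2*M+2)).
Lemma zr_in M i : (- Z.of_nat M - 1 <= i <= Z.of_nat M)%Z -> In i (zr M).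
Proof. intro h. unfold zr. apply in_map_iff. exists (Z.to_nat (i + Z.of_nat M + 1)).
  split. rewrite Z2Nat.id by lia. lia. apply in_seq. lia. Qed.
Lemma zr_len M : length (zr M) = (2*M+2)%nat.
Proof. unfold zr. rewrite length_map, length_seq. reflexivity. Qed.

Definition cells (M : nat) := list_prod (list_prod (zr M) (zr M)) (zr M).
Lemma cells_len M : length (cells M) = ((2*M+2)*(2*M+2)*(2*M+2))%nat.
Proof. unfold cells. rewrite !length_prod, zr_len. reflexivity. Qed.

Definition cx (p : pt3) := fst (fst p).
Definition cy (p : pt3) := snd (fst p).
Definition cz (p : pt3) := snd p.

Definition Zt_eq (x y : Z * Z * Z) : {x = y} + {x <> y}.
Proof. decide equality; try apply Z.eq_dec. decide equality; apply Z.eq_dec. Defined.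

Lemma coord_le p : Rabs (cx p) <= norm3 p /\ Rabs (cy p) <= norm3 p /\ Rabs (cz p) <= norm3 p.
Proof. destruct p as [[a b] c]. unfold cx, cy, cz, norm3; simpl.
  assert (0 <= a*a) by nra. assert (0 <= b*b) by nra. assert (0 <= c*c) by nra.
  repeat split; rewrite <- sqrt_Rsqr_abs; apply sqrt_le_1_alt; unfold Rsqr; lra. Qed.

Lemma grid s e C (z : pt3) (h : R) (M : nat) (w : ball3 -> pt3) (l : list ball3) :
  is_cover s e C -> 0 < s -> 0 < h -> NoDup l ->
  (forall B, In B l -> C B /\ dist3 (w B) (center B) + h <= radius B /\
       dist3 (w B) z <= INR M * h) ->
  INR (length l) <= INR ((2*M+2)*(2*M+2)*(2*M+2)) * s.
Proof.
  intros hc hs hh hnd hl.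
  set (g := fun B => let v := sub3 (w B) z in (fl (cx v / h), fl (cy v / h), fl (cz v / h))).
  rewrite <- cells_len. apply (pigeon Zt_eq g).
  - intros B hB. destruct (hl B hB) as [_ [_ hd]]. unfold dist3 in hd.
    destruct (coord_le (sub3 (w B) z)) as [h1 [h2 h3]].
    assert (forall t, Rabs t <= INR M * h -> Rabs (t / h) <= INR M).
    { intros t ht. unfold Rdiv. rewrite Rabs_mult, Rabs_inv, (Rabs_right h) by lra.
      apply Rmult_le_reg_r with h; auto. rewrite Rmult_assoc, Rinv_l by lra. lra. }
    unfold g, cells. apply in_prod; [apply in_prod|]; apply zr_in, fl_range, H; lra.
  - intro k. apply (clique s e C); auto.
    + apply NoDup_filter'; auto.
    + intros B hB. apply filter_In in hB. apply hl; tauto.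
    + intros B B' hB hB'. apply filter_In in hB as [hB hk]. apply filter_In in hB' as [hB' hk'].
      unfold isk in hk, hk'. destruct (Zt_eq (g B) k) as [e1|]; [|discriminate].
      destruct (Zt_eq (g B') k) as [e2|]; [|discriminate]. rewrite <- e2 in e1.
      unfold g in e1. injection e1 as ex ey ez.
      destruct (hl B hB) as [cB [rB _]]. destruct (hl B' hB') as [cB' [rB' _]].
      assert (hd: dist3 (center (w B, h)) (center (w B', h)) <= radius (w B, h) + radius (w B', h)).
      simpl.
      { apply fl_eq in ex; apply fl_eq in ey; apply fl_eq in ez.
        destruct (w B) as [[a1 b1] c1] eqn:E1, (w B') as [[a2 b2] c2] eqn:E2.
        destruct z as [[z1 z2] z3]. unfold cx, cy, cz in *; simpl in *.
        rewrite dist3_def. apply sqrt_le_iff. apply sq3_nonneg. lra.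
        replace ((a1 - z1)/h - (a2 - z1)/h) with ((a1-a2)/h) in ex by (field; lra).
        replace ((b1 - z2)/h - (b2 - z2)/h) with ((b1-b2)/h) in ey by (field; lra).
        replace ((c1 - z3)/h - (c2 - z3)/h) with ((c1-c2)/h) in ez by (field; lra).
        unfold Rdiv in *. rewrite Rabs_mult, Rabs_inv, (Rabs_right h) in ex, ey, ez by lra.
        assert (forall t, Rabs t * / h < 1 -> t * t <= h * h).
        { intros t ht. apply Rmult_lt_compat_r with (r := h) in ht; auto.
          rewrite Rmult_assoc, Rinv_l, Rmult_1_r, Rmult_1_l in ht by lra.
          revert ht; unfold Rabs; destruct (Rcase_abs t); intro; nra. }
        apply H in ex; apply H in ey; apply H in ez. unfold sq3. nra. }
      apply close_intersect in hd; try (simpl; lra). destruct hd as [p [hp1 hp2]].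
      assert (hq1 : dist3 p (w B) <= h) by exact hp1.
      assert (hq2 : dist3 p (w B') <= h) by exact hp2.
      exists p. split; apply in_ball_dist.
      * eapply Rle_trans. apply (dist3_tri _ (w B)). lra.
      * eapply Rle_trans. apply (dist3_tri _ (w B')). lra.
Qed.


Lemma subball (c y : pt3) (rho h : R) : 0 < h <= rho -> dist3 y c <= rho ->
  exists w, dist3 w y <= h /\ dist3 w c + h <= rho.
Proof. intros hh hy. set (D := dist3 y c).
  destruct (Rle_or_lt D (rho - h)).
  - exists y. rewrite dist3_refl. split; unfold D in *; lra.
  - destruct (Rle_or_lt D h).
    + exists c. rewrite dist3_refl, dist3_sym. split; unfold D in *; lra.
    + exists (lerp y c (h / D)). assert (0 < D) by lra.
      rewrite lerp_dist1, lerp_dist2.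
      * fold D. split. right; field; lra.
        replace ((1 - h/D) * D) with (D - h) by (field; lra). unfold D in *; lra.
      * apply Rmult_le_reg_r with D; auto. unfold Rdiv; rewrite Rmult_assoc, Rinv_l by lra. lra.
      * unfold Rdiv; apply Rmult_le_pos; [lra| left; apply Rinv_0_lt_compat; lra].
Qed.

Lemma LF s e C z (l : list ball3) : is_cover s e C -> 0 < s -> NoDup l ->
  (forall B, In B l -> C B /\ exists y, in_ball y B /\ dist3 y z <= 1) ->
  INR (length l) <= 512 * s.
Proof. intros hc hs hnd hl.
  set (P := fun B w => dist3 w (center B) + /2 <= radius B /\ dist3 w z <= INR 3 * /2).
  set (wf := fun B => epsilon (inhabits ((0,0,0) : pt3)) (P B)).
  replace 512 with (INR ((2*3+2)*(2*3+2)*(2*3+2))) by (simpl; ring).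
  apply (grid s e C z (/2) 3 wf l); auto. lra.
  intros B hB. destruct (hl B hB) as [hC [y [hy hyz]]].
  assert (P B (wf B)).
  { apply epsilon_spec. assert (r1 := cover_r1 _ _ _ _ hc hC).
    destruct (subball (center B) y (radius B) (/2)) as [w [h1 h2]]. lra. exact hy.
    exists w. split; auto. eapply Rle_trans. apply (dist3_tri _ y). simpl; lra. }
  destruct H. auto.
Qed.

Lemma pos_margin z (l : list ball3) : (forall B, In B l -> ~ in_ball z B) ->
  exists d, 0 < d /\ forall B, In B l -> d <= dist3 z (center B) - radius B.
Proof. induction l as [|B l IH]; intro h.
  - exists 1. split. lra. intros B [].
  - destruct IH as [d [hd hd']]. intros; apply h; simpl; auto.
    assert (hB: ~ in_ball z B) by (apply h; simpl; auto).
    assert (hB': radius B < dist3 z (center B)) by (apply Rnot_le_lt; exact hB).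
    exists (Rmin d (dist3 z (center B) - radius B)). split. apply Rmin_pos; lra.
    intros B' [<-|hB'']. apply Rmin_r. eapply Rle_trans. apply Rmin_l. auto.
Qed.

Lemma acc s e C z (F : ball3 -> Prop) : is_cover s e C -> 0 < s ->
  (forall B, F B -> C B) -> (forall B, F B -> ~ in_ball z B) ->
  (forall d, 0 < d -> exists y B, F B /\ in_ball y B /\ dist3 y z < d) -> False.
Proof. intros hc hs hF hz hacc.
  assert (build: forall m : nat, exists l, NoDup l /\ length l = m /\
     forall B, In B l -> F B /\ exists y, in_ball y B /\ dist3 y z <= 1).
  { induction m as [|m IH].
    - exists nil. split. constructor. split. auto. intros B [].
    - destruct IH as [l [hnd [hlen hl]]].
      destruct (pos_margin z l) as [d [hd hd']]. intros B hB; apply hz, hl, hB.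
      destruct (hacc (Rmin d 1)) as [y [B' [hB' [hy hyz]]]]. apply Rmin_pos; lra.
      assert (Rmin d 1 <= d) by apply Rmin_l. assert (Rmin d 1 <= 1) by apply Rmin_r.
      exists (B' :: l). split; [|split].
      + constructor; auto. intro hin. specialize (hd' B' hin).
        assert (dist3 z (center B') <= dist3 z y + dist3 y (center B')) by apply dist3_tri.
        rewrite dist3_sym in hyz. assert (dist3 y (center B') <= radius B') by exact hy. lra.
      + simpl; auto.
      + intros B [<-|hB]. split; auto. exists y; split; auto. lra. auto. }
  set (m := Z.to_nat (up (512 * s))).
  destruct (build m) as [l [hnd [hlen hl]]].
  assert (INR (length l) <= 512 * s).
  { apply (LF s e C z l hc hs hnd). intros B hB. destruct (hl B hB) as [h1 h2]. auto. }
  rewrite hlen in H. unfold m in H. destruct (archimed (512*s)).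
  rewrite INR_IZR_INZ, Z2Nat.id in H. lra. apply le_IZR. lra.
Qed.


Definition O3 : pt3 := (0,0,0).
Definition scal3 (t : R) (p : pt3) : pt3 := let '(a,b,c) := p in (t*a, t*b, t*c).

Lemma norm_dist p : norm3 p = dist3 p O3.
Proof. destruct p as [[a b] c]. unfold dist3, norm3; simpl. f_equal; ring. Qed.

Lemma scal_dist t u p : dist3 (scal3 t p) (scal3 u p) = Rabs (t - u) * dist3 p O3.
Proof. destruct p as [[a b] c]. simpl scal3. unfold O3. rewrite !dist3_def, <- sqrt_scale. f_equal. unfold sq3; ring. Qed.

Lemma alg_core t a S X2 X r d rho :
  0 < r -> 0 < d -> X = r + d -> X2 = X * X -> 0 <= t -> t * X <= d -> 2*d <= rho -> d <= 2 * r ->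
  S - 2*t*a + t*t*X2 <= rho*rho -> rho*rho < S ->
  X2 - 2*a + S <= (r+rho)*(r+rho).
Proof. intros. subst X2 X.
  assert (ha: 0 < t*a). { assert (0 <= t*t*((r+d)*(r+d))) by (apply Rmult_le_pos; nra). lra. }
  assert (ht: t < 1). { destruct (Rlt_or_le t 1); auto. nra. }
  assert (0 < t) by (destruct (Rle_lt_or_eq_dec 0 t); auto; subst; lra).
  assert (0 < a) by nra.
  assert (0 <= a * (1 - t)) by nra.
  assert (0 <= t*t*((r+d)*(r+d))) by (apply Rmult_le_pos; nra).
  assert (2*r*d + d*d <= 2*r*rho) by nra.
  nra. Qed.

Lemma seg_intersect (B B' : ball3) (t : R) :
  let X := dist3 (center B) O3 in
  0 < radius B -> 0 < X - radius B -> X - radius B <= 2 * radius B ->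
  0 <= t -> t * X <= X - radius B ->
  2 * (X - radius B) <= radius B' ->
  in_ball (scal3 t (center B)) B' -> ~ in_ball O3 B' -> balls_intersect B B'.
Proof. intros X hr hd hd2 ht htX hrho h1 h2.
  assert (hr' : 0 < radius B') by lra.
  apply close_intersect; auto.
  destruct B as [[[x1 x2] x3] r], B' as [[[c1 c2] c3] rho]. unfold X, center, radius in *; simpl in *.
  unfold in_ball in h1, h2. fold (dist3 (t*x1,t*x2,t*x3) (c1,c2,c3)) in h1.
  fold (dist3 O3 (c1,c2,c3)) in h2. unfold O3 in *. rewrite !dist3_def in *. simpl in h1, h2.
  apply sqrt_le_iff. apply sq3_nonneg. lra.
  apply sqrt_le_iff in h1; [|apply sq3_nonneg|lra].
  assert (h2' : rho * rho < sq3 (0 - c1) (0 - c2) (0 - c3)).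
  { destruct (Rlt_or_le (rho*rho) (sq3 (0 - c1) (0 - c2) (0 - c3))); auto. exfalso; apply h2.
    apply sqrt_le_iff; auto. apply sq3_nonneg. lra. }
  set (Xv := sqrt (sq3 (x1 - 0) (x2 - 0) (x3 - 0))) in *.
  assert (hX2 : sq3 (x1 - 0) (x2 - 0) (x3 - 0) = Xv * Xv) by (symmetry; apply sqrt_sqrt, sq3_nonneg).
  pose proof (alg_core t (c1*x1+c2*x2+c3*x3) (sq3 c1 c2 c3) (sq3 x1 x2 x3) Xv r (Xv - r) rho) as hc.
  unfold sq3 in *. 
  replace ((x1 - c1) * (x1 - c1) + (x2 - c2) * (x2 - c2) + (x3 - c3) * (x3 - c3)) with
    ((x1*x1+x2*x2+x3*x3) - 2 * (c1*x1+c2*x2+c3*x3) + (c1*c1+c2*c2+c3*c3)) by ring.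
  apply hc; try lra.
Qed.


Lemma scal_dist1 t p : dist3 (scal3 t p) p = Rabs (t - 1) * dist3 p O3.
Proof. destruct p as [[a b] c]. simpl scal3. unfold O3. rewrite !dist3_def, <- sqrt_scale. f_equal. unfold sq3; ring. Qed.

Lemma scal_dist0 p q : dist3 (scal3 0 p) q = dist3 O3 q.
Proof. destruct p as [[a b] c], q as [[a' b'] c']. simpl scal3. unfold O3. rewrite !dist3_def. f_equal. unfold sq3; ring. Qed.

Lemma ib p B : dist3 p (center B) <= radius B -> in_ball p B.
Proof. auto. Qed.
Lemma ib' p B : in_ball p B -> dist3 p (center B) <= radius B.
Proof. auto. Qed.

Lemma claimU s e C B0 B n p :
  is_cover s e C -> 0 < s -> C B0 -> in_ball O3 B0 ->
  C B -> in_ball p B -> dist3 p O3 <= 2 * n -> 0 < n ->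
  e * e * e * radius B0 <= n -> (4 * e * e + 1) * n < radius B -> False.
Proof.
  intros hc hs hB0 h0 hB hp hpn hn hr0 hrB.
  assert (he : 1 <= e) by (eapply eta_ge1; eauto).
  assert (r01 := cover_r1 _ _ _ _ hc hB0).
  set (x := center B) in *. set (r := radius B) in *. set (r0 := radius B0) in *.
  set (X := dist3 x O3).
  assert (her0 : e * r0 <= e*e*e*r0).
  { assert (e*r0*1 <= e*r0*(e*e)) by (apply Rmult_le_compat_l; nra). nra. }
  assert (hr4 : n + 4*e*e*n < r) by lra.
  assert (her0p : 0 <= e * r0) by nra.
  assert (hee : 0 <= 4*e*e*n) by nra.
  assert (hX : r < X).
  { destruct (Rlt_or_le r X) as [|hle]; auto. exfalso.
    assert (hi : balls_intersect B B0). { exists O3. split; auto. apply ib.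
      rewrite dist3_sym. exact hle. }
    pose proof (ratio _ _ _ _ _ hc hB hB0 hi). fold r r0 in H. lra. }
  set (d := X - r).
  assert (hd : 0 < d) by (unfold d; lra).
  assert (hd2n : d <= 2 * n).
  { assert (X <= dist3 x p + dist3 p O3) by apply dist3_tri.
    assert (dist3 x p <= r) by (rewrite dist3_sym; exact (ib' _ _ hp)). unfold d; lra. }
  assert (hXpos : 0 < X) by lra.
  set (tau := d / X).
  assert (htau : 0 <= tau < 1).
  { unfold tau. split. unfold Rdiv; apply Rmult_le_pos; [lra|left; apply Rinv_0_lt_compat; lra].
    apply Rmult_lt_reg_r with X; auto. unfold Rdiv; rewrite Rmult_assoc, Rinv_l by lra. unfold d; lra. }
  assert (htauX : tau * X = d) by (unfold tau; field; lra).
  set (S := e * r0 + 2 * d).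
  set (small := fun B' => C B' /\ radius B' <= S).
  set (large := fun B' => C B' /\ r <= e * radius B').
  assert (classif : forall t B', 0 <= t <= tau -> C B' -> in_ball (scal3 t x) B' ->
             small B' \/ large B').
  { intros t B' ht hB' hin. destruct (Rle_or_lt (radius B') S) as [hs'|hs'].
    left; split; auto. right; split; auto.
    assert (hno : ~ in_ball O3 B').
    { intro hO. assert (hi : balls_intersect B' B0) by (exists O3; split; auto).
      pose proof (ratio _ _ _ _ _ hc hB' hB0 hi). fold r0 in H. unfold S in hs'. lra. }
    assert (hi : balls_intersect B B').
    { apply (seg_intersect B B' t); fold x r X; fold d; auto; try lra.
      assert (t * X <= tau * X) by (apply Rmult_le_compat_r; lra). lra.
      unfold S in hs'. lra. }
    exact (ratio _ _ _ _ _ hc hB hB' hi). }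
  assert (nomix : forall Bs Bl, small Bs -> large Bl -> balls_intersect Bl Bs -> False).
  { intros Bs Bl [hCs hSs] [hCl hLl] hi.
    pose proof (ratio _ _ _ _ _ hc hCl hCs hi).
    assert (e * radius Bl <= e * (e * radius Bs)) by (apply Rmult_le_compat_l; lra).
    assert (e * (e * radius Bs) <= e * (e * S)) by (apply Rmult_le_compat_l; [lra|apply Rmult_le_compat_l; lra]).
    assert (e*(e*S) = e*e*e*r0 + 2*(e*e)*d) by (unfold S; ring).
    assert (2*(e*e)*d <= 2*(e*e)*(2*n)) by (apply Rmult_le_compat_l; nra).
    lra. }
  set (E := fun t => 0 <= t <= tau /\ exists Bs, small Bs /\ in_ball (scal3 t x) Bs).
  assert (hE0 : E 0).
  { split. lra. exists B0. split. split; auto. unfold S. assert (r0 <= e*r0) by nra. fold r0. lra.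
    apply ib. rewrite scal_dist0. exact h0. }
  assert (hEb : bound E) by (exists tau; intros t [ht _]; lra).
  destruct (completeness E hEb (ex_intro _ 0 hE0)) as [ts [hub hlub]].
  assert (hts : 0 <= ts <= tau).
  { split. apply hub; auto. apply hlub. intros t [ht _]; lra. }
  set (z := scal3 ts x).
  assert (hdist : forall t, dist3 (scal3 t x) z = Rabs (t - ts) * X).
  { intro t. unfold z. apply scal_dist. }
  destruct (classic (exists Bs, small Bs /\ in_ball z Bs)) as [[Bs [hsm hzs]]|hno].
  -
    assert (hlt : ts < tau).
    { destruct (Rlt_or_le ts tau); auto. exfalso. assert (ts = tau) by lra.
      apply (nomix Bs B hsm). split; auto. fold r; nra.
      exists z. split; auto. apply ib. fold x. unfold z. rewrite scal_dist1.
      fold X. rewrite Rabs_left by lra. fold r. subst ts. unfold d in htauX. lra. }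
    apply (acc s e C z large hc hs).
    + intros B' [h _]; auto.
    + intros B' hl hz. apply (nomix Bs B' hsm hl). exists z; auto.
    + intros dl hdl. set (t := ts + Rmin (dl / (2 * X)) (tau - ts)).
      assert (hq : 0 < dl / (2*X)) by (unfold Rdiv; apply Rmult_lt_0_compat; [lra|apply Rinv_0_lt_compat; lra]).
      assert (h1 : ts < t) by (unfold t; apply Rplus_lt_le_0_compat' || (assert (0 < Rmin (dl / (2 * X)) (tau - ts)) by (apply Rmin_pos; lra); lra)).
      assert (h2 : t <= tau) by (unfold t; assert (Rmin (dl / (2 * X)) (tau - ts) <= tau - ts) by apply Rmin_r; lra).
      assert (h3 : t - ts <= dl / (2 * X)) by (unfold t; assert (Rmin (dl / (2 * X)) (tau - ts) <= dl/(2*X)) by apply Rmin_l; lra).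
      destruct hc as [hcov hrest]. destruct (hcov (scal3 t x)) as [B' [hB' hin]].
      exists (scal3 t x), B'. split; [|split; auto].
      * destruct (classif t B') as [hs'|hl']; auto. lra. exfalso.
        assert (t <= ts) by (apply hub; split; [lra| exists B'; auto]). lra.
      * rewrite hdist, Rabs_right by lra.
        assert ((t - ts) * X <= dl / (2*X) * X) by (apply Rmult_le_compat_r; lra).
        assert (dl / (2*X) * X = dl / 2) by (field; lra). lra.
  -
    apply (acc s e C z small hc hs).
    + intros B' [h _]; auto.
    + intros B' hsm hz. apply hno. exists B'; auto.
    + intros dl hdl.
      assert (hq : 0 < dl / X) by (unfold Rdiv; apply Rmult_lt_0_compat; [lra|apply Rinv_0_lt_compat; lra]).
      destruct (classic (exists t, E t /\ ts - dl / X < t)) as [[t [[ht [Bs [hsm hin]]] hlt]]|hne].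
      * exists (scal3 t x), Bs. split; auto. split; auto.
        assert (t <= ts) by (apply hub; split; auto; exists Bs; auto).
        rewrite hdist, Rabs_left1 by lra.
        assert ((- (t - ts)) * X < dl / X * X) by (apply Rmult_lt_compat_r; lra).
        assert (dl / X * X = dl) by (field; lra). lra.
      * exfalso. assert (ts <= ts - dl / X). { apply hlub. intros t ht.
          destruct (Rle_or_lt t (ts - dl/X)); auto. exfalso; apply hne; exists t; auto. }
        lra.
Qed.


Lemma part1 s e C B0 B n :
  is_cover s e C -> 0 < s -> C B0 -> in_ball O3 B0 ->
  C B -> meets_annulus n B -> 0 < n ->
  e * e * e * radius B0 <= n -> 2 * e * radius B0 <= n ->
  n / 2 <= dist3 (center B) O3 /\ radius B <= (4*e*e+1) * n.
Proof. intros hc hs hB0 h0 hB [p [hp [hp1 hp2]]] hn h1 h2.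
  rewrite norm_dist in hp1, hp2. split.
  - destruct (Rle_or_lt (n/2) (dist3 (center B) O3)) as [|hlt]; auto. exfalso.
    assert (dist3 p O3 <= dist3 p (center B) + dist3 (center B) O3) by apply dist3_tri.
    assert (hpx := ib' _ _ hp).
    assert (hi : balls_intersect B B0). { exists O3. split; auto. apply ib. rewrite dist3_sym. lra. }
    pose proof (ratio _ _ _ _ _ hc hB hB0 hi). lra.
  - destruct (Rle_or_lt (radius B) ((4*e*e+1) * n)) as [|hlt]; auto. exfalso.
    apply (claimU s e C B0 B n p); auto.
Qed.

Theorem lemma5p5 :
  forall (eta kappa : R), 0 < eta -> 0 < kappa ->
  exists L : R, 2 <= L /\
  forall (sigma : R) (C : ball3 -> Prop),
    0 < sigma ->
    is_cover sigma eta C ->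
    (exists R0 : R, forall B, C B -> R0 <= norm3 (center B) ->
        cbrt (vol B) >= kappa * norm3 (center B)) ->
    exists N : nat, forall n : nat, (N <= n)%nat ->
      (forall B, C B -> meets_annulus (INR n) B ->
         ball_subset_origin B (L * INR n) /\ norm3 (center B) >= / L * INR n) /\
      at_most (fun B => C B /\ meets_annulus (INR n) B)
              (4 * PI / 3 * sigma * L ^ 6 * / kappa ^ 3).
Proof.
  intros e k he hk.
  set (L1 := 4*e*e+1).
  assert (hL1 : 1 <= L1) by (unfold L1; nra).
  set (Q := (2 + L1) * 2 * c3 / k).
  set (M := Z.to_nat (up Q)).
  assert (hM : Q <= INR M).
  { unfold M. destruct (archimed Q). assert (0 < Q).
    { unfold Q. assert (hc3 := c3_pos). unfold Rdiv. apply Rmult_lt_0_compat. nra. apply Rinv_0_lt_compat; lra. }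
    rewrite INR_IZR_INZ, Z2Nat.id. lra. apply le_IZR. lra. }
  set (A := INR (2*M+2) * k).
  assert (hA : 0 < A) by (unfold A; apply Rmult_lt_0_compat; [apply lt_0_INR; lia|lra]).
  exists (2 + 2*L1 + A). split. lra.
  set (L := 2 + 2*L1 + A).
  intros s C hs hc [R0 hR0].
  assert (hcov : forall p : pt3, exists B, C B /\ in_ball p B) by apply hc.
  destruct (hcov O3) as [B0 [hB0 h0]].
  assert (r01 := cover_r1 _ _ _ _ hc hB0).
  assert (he1 := eta_ge1 _ _ _ _ hc hB0).
  set (r0 := radius B0) in *.
  set (T := e*e*e*r0 + 2*e*r0 + 2*Rabs R0 + 1).
  exists (Z.to_nat (up T)). intros n hn.
  assert (hnT : T <= INR n).
  { destruct (archimed T). assert (0 < T). { unfold T. assert (0 <= Rabs R0) by apply Rabs_pos. assert (0 <= e*e*e*r0) by (apply Rmult_le_pos; [apply Rmult_le_pos; [apply Rmult_le_pos|]|]; lra). assert (0 <= 2*e*r0) by nra. lra. }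
    apply le_INR in hn. rewrite INR_IZR_INZ, Z2Nat.id in hn. lra. apply le_IZR. lra. }
  assert (hT : 0 < INR n /\ e*e*e*r0 <= INR n /\ 2*e*r0 <= INR n /\ R0 <= INR n / 2).
  { unfold T in hnT. assert (0 <= e*e*e*r0) by (repeat apply Rmult_le_pos; lra).
    assert (0 <= 2*e*r0) by nra. assert (R0 <= Rabs R0) by apply Rle_abs.
    assert (0 <= Rabs R0) by apply Rabs_pos. lra. }
  destruct hT as [hn0 [hn1 [hn2 hn3]]].
  assert (HP : forall B, C B -> meets_annulus (INR n) B ->
     INR n / 2 <= dist3 (center B) O3 /\ radius B <= L1 * INR n /\
     dist3 (center B) O3 <= (2 + L1) * INR n).
  { intros B hB hm. destruct (part1 s e C B0 B (INR n) hc hs hB0 h0 hB hm) as [h1 h2]; auto.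
    split; auto. split; auto. destruct hm as [p [hp [_ hp2]]]. rewrite norm_dist in hp2.
    assert (dist3 (center B) O3 <= dist3 (center B) p + dist3 p O3) by apply dist3_tri.
    assert (dist3 (center B) p <= radius B) by (rewrite dist3_sym; apply ib'; auto).
    fold L1 in h2. lra. }
  split.
  - intros B hB hm. destruct (HP B hB hm) as [h1 [h2 h3]]. split.
    + intros p hp. rewrite norm_dist.
      assert (dist3 p O3 <= dist3 p (center B) + dist3 (center B) O3) by apply dist3_tri.
      assert (dist3 p (center B) <= radius B) by (apply ib'; auto).
      assert (2 * L1 * INR n + 2 * INR n <= L * INR n).
      { unfold L. nra. }
      lra.
    + rewrite norm_dist. apply Rle_ge.
      apply Rle_trans with (INR n / 2); auto.
      assert (0 < L) by (unfold L; lra).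
      apply Rmult_le_reg_l with L; auto. rewrite <- Rmult_assoc, Rinv_r by lra.
      assert (2 <= L) by (unfold L; lra). nra.
  - intros l hnd hl.
    set (h := k * INR n / (2 * c3)).
    assert (hc3 := c3_pos).
    assert (hh : 0 < h) by (unfold h; unfold Rdiv; apply Rmult_lt_0_compat; [nra|apply Rinv_0_lt_compat; lra]).
    eapply Rle_trans.
    + apply (grid s e C O3 h M (fun B => center B) l hc hs hh hnd).
      intros B hB. destruct (hl B hB) as [hCB hm]. destruct (HP B hCB hm) as [h1 [h2 h3]].
      split; auto. rewrite dist3_refl. split.
      * assert (hk' := hR0 B hCB). rewrite norm_dist in hk'.
        assert (hr1 := cover_r1 _ _ _ _ hc hCB).
        specialize (hk' ltac:(lra)). rewrite cbrt_vol in hk' by lra.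
        assert (k * (INR n / 2) <= k * dist3 (center B) O3) by (apply Rmult_le_compat_l; lra).
        assert (h * (2 * c3) = k * INR n) by (unfold h; field; lra).
        assert (c3 * h <= c3 * radius B) by nra.
        assert (h <= radius B) by (apply Rmult_le_reg_l with c3; auto). lra.
      * apply Rle_trans with ((2 + L1) * INR n); auto.
        assert (Q * h = (2 + L1) * INR n) by (unfold Q, h; field; split; lra).
        rewrite <- H. apply Rmult_le_compat_r; lra.
    + assert (hA3 : INR ((2*M+2)*(2*M+2)*(2*M+2)) = (A / k) ^ 3).
      { unfold A. rewrite !mult_INR. field. lra. }
      rewrite hA3.
      assert (hL : A <= L) by (unfold L; lra).
      assert (hpi : 3 < PI) by (pose proof PI2_3_2; lra).
      assert (hL6 : A ^ 3 <= L ^ 6).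
      { assert (1 <= L) by (unfold L; lra).
        assert (A^3 <= L^3) by (apply pow_incr; lra).
        assert (L^3 <= L^6). { replace (L^6) with (L^3 * L^3) by ring. 
          assert (1 <= L^3) by (apply pow_R1_Rle; lra). nra. }
        lra. }
      replace ((A / k) ^ 3 * s) with (s * A^3 * / k^3) by (field; lra).
      assert (0 < / k ^ 3) by (apply Rinv_0_lt_compat, pow_lt; lra).
      assert (s * A^3 <= 4 * PI / 3 * s * L^6).
      { assert (0 <= A^3) by (apply pow_le; lra).
        assert (s * A^3 <= s * L^6) by (apply Rmult_le_compat_l; lra).
        assert (0 <= s * L^6) by (apply Rmult_le_pos; [lra|apply pow_le; lra]).
        assert (4 * PI / 3 * s * L^6 = (4*PI/3) * (s * L^6)) by ring.
        assert (1 * (s * L^6) <= (4*PI/3) * (s * L^6)) by (apply Rmult_le_compat_r; lra).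
        lra. }
      apply Rmult_le_compat_r; lra.
Qed.
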